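(* Let $(K,d_K)$ be an acyclic graded-commutative dg-algebra and let $(A,d_A)$ be a dg-algebra over $(K,d_K)$. Then the map $\alpha:\ker(d_A)\otimes_{\ker(d_K)}K\to A$, $a\otimes x\mapsto ax$, is an isomorphism of dg-algebras, where $\ker(d_A)\otimes_{\ker(d_K)}K$ carries the differential $a\otimes x\mapsto(-1)^{|a|}a\otimes d_K(x)$.
   Context: Dg-algebra: $\mathbb Z$-graded algebra with degree-$1$ map $d$, $d^2=0$, $d(ab)=d(a)b+(-1)^{|a|}a\,d(b)$. Acyclic means the cohomology $H(K,d_K)=\ker(d_K)/\mathrm{im}(d_K)$ vanishes. Graded-commutative: $xy=(-1)^{|x||y|}yx$ for homogeneous $x,y$. Graded centre $Z_{gr}(A)$: spanned by homogeneous $z$ with $za=(-1)^{|z||a|}az$. A dg-algebra over $(K,d_K)$ is a dg-algebra $(A,d_A)$ with a degree-$0$ graded ring homomorphism $K\to Z_{gr}(A)$ commuting with differentials. The tensor product algebra uses $(a\otimes x)(b\otimes y)=(-1)^{|x||b|}ab\otimes xy$. *)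

(* Defs.v *)
From HB Require Import structures.
From mathcomp Require Import all_boot all_order all_algebra.
From mathcomp Require Import freeg.
Set Implicit Arguments.
Unset Strict Implicit.
Unset Printing Implicit Defensive.
Import Order.TTheory GRing.Theory Num.Theory.
Local Open Scope ring_scope.

(* Z-graded rings.  A Z-graded algebra (over Z) A = (+)_n A_n is       *)
(* represented by its underlying ring [A] together with the family of  *)
(* homogeneous components [H n : A -> Prop] (H n a <-> a \in A_n).     *)

Definition sgn (R : pzRingType) (n : int) : R := (-1) ^+ `|n|%N.

Definition is_graded (A : pzRingType) (H : int -> A -> Prop) : Prop :=
  [/\
      (forall n, H n 0),
      (forall n a b, H n a -> H n b -> H n (a - b)),
      (forall m n a b, H m a -> H n b -> H (m + n) (a * b)) /\ H 0 1,
      (forall a : A, exists s : seq (int * A),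
          {in s, forall p, H p.1 p.2} /\ a = \sum_(p <- s) p.2)
    &
      (forall s : seq (int * A), uniq (map fst s) ->
          {in s, forall p, H p.1 p.2} -> \sum_(p <- s) p.2 = 0 ->
          {in s, forall p, p.2 = 0})].

Definition is_dga (A : pzRingType) (H : int -> A -> Prop) (d : A -> A) : Prop :=
  [/\ is_graded H,
      (forall a b, d (a + b) = d a + d b),
      (forall n a, H n a -> H (n + 1) (d a)),
      (forall a, d (d a) = 0)
    & (forall n a b, H n a -> d (a * b) = d a * b + sgn A n * a * d b)].

Definition graded_commutative (K : pzRingType) (H : int -> K -> Prop) : Prop :=
  forall m n x y, H m x -> H n y -> x * y = sgn K (m * n) * (y * x).

Definition acyclic (K : pzRingType) (d : K -> K) : Prop :=
  forall x, d x = 0 -> exists y, x = d y.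

Definition gr_central_hom (A : pzRingType) (H : int -> A -> Prop) (m : int) (z : A) :=
  H m z /\ forall n a, H n a -> z * a = sgn A (m * n) * (a * z).

Definition in_graded_centre (A : pzRingType) (H : int -> A -> Prop) (z : A) : Prop :=
  exists s : seq (int * A),
    {in s, forall p, gr_central_hom H p.1 p.2} /\ z = \sum_(p <- s) p.2.

(* (A, d_A) is a dg-algebra over (K, d_K) via phi : K -> Z_gr(A), a   *)
(* degree-0 graded ring homomorphism commuting with the differentials  *)
Definition dga_over (K A : pzRingType) (HK : int -> K -> Prop) (dK : K -> K)
    (HA : int -> A -> Prop) (dA : A -> A) (phi : K -> A) : Prop :=
  [/\ (forall x y, phi (x + y) = phi x + phi y),
      (forall x y, phi (x * y) = phi x * phi y),
      phi 1 = 1,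
      (forall n x, HK n x -> HA n (phi x)) /\
      (forall x, in_graded_centre HA (phi x))
    & (forall x, dA (phi x) = phi (dK x))].

(* The tensor product ker(d_A) (x)_{ker(d_K)} K, presented as the free *)
(* abelian group on generators [p, a, q, x] = a (x) x  (a \in ker d_A  *)
(* homogeneous of degree p, x \in K homogeneous of degree q) modulo    *)
(* the subgroup of bilinearity and balancing relations.                *)

Definition gen (A K : pzRingType) : Type := (int * A * int * K)%type.
Definition Gen (A K : pzRingType) p (a : A) q (x : K) : gen A K := (p, a, q, x).
Definition gdegA {A K : pzRingType} (g : gen A K) : int := g.1.1.1.
Definition gelA {A K : pzRingType} (g : gen A K) : A := g.1.1.2.
Definition gdegK {A K : pzRingType} (g : gen A K) : int := g.1.2.
Definition gelK {A K : pzRingType} (g : gen A K) : K := g.2.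

Definition FT (A K : pzRingType) := {freeg (gen A K) / int}.

Definition fgen {A K : pzRingType} (g : gen A K) : FT A K := << g >>.

Section Tensor.
Variables (K A : pzRingType) (HK : int -> K -> Prop) (dK : K -> K)
          (HA : int -> A -> Prop) (dA : A -> A) (phi : K -> A).

Definition wf_gen (g : gen A K) : Prop :=
  [/\ HA (gdegA g) (gelA g), dA (gelA g) = 0 & HK (gdegK g) (gelK g)].

Definition wf_FT (s : FT A K) : Prop := {in dom s, forall g, wf_gen g}.

Inductive tensor_rel_gen : FT A K -> Prop :=
  | rel_addl p a a' q x :
      HA p a -> dA a = 0 -> HA p a' -> dA a' = 0 -> HK q x ->
      tensor_rel_gen (fgen (Gen p (a + a') q x) - fgen (Gen p a q x) - fgen (Gen p a' q x))
  | rel_addr p a q x x' :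
      HA p a -> dA a = 0 -> HK q x -> HK q x' ->
      tensor_rel_gen (fgen (Gen p a q (x + x')) - fgen (Gen p a q x) - fgen (Gen p a q x'))
  | rel_bal p a r z q x :
      HA p a -> dA a = 0 -> HK r z -> dK z = 0 -> HK q x ->
      tensor_rel_gen (fgen (Gen (p + r) (a * phi z) q x) - fgen (Gen p a (r + q) (z * x))).

Inductive tensor_rel : FT A K -> Prop :=
  | trel_gen s : tensor_rel_gen s -> tensor_rel s
  | trel_zero : tensor_rel 0
  | trel_sub s t : tensor_rel s -> tensor_rel t -> tensor_rel (s - t).

Definition gen_mul (g h : gen A K) : FT A K :=
  << sgn int (gdegK g * gdegA h) *g
     Gen (gdegA g + gdegA h) (gelA g * gelA h) (gdegK g + gdegK h) (gelK g * gelK h) >>.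

Definition tmul (s t : FT A K) : FT A K :=
  \sum_(g <- dom s) \sum_(h <- dom t) (coeff g s * coeff h t) *: gen_mul g h.

Definition tone : FT A K := fgen (Gen 0 1 0 1).

Definition gen_diff (g : gen A K) : FT A K :=
  << sgn int (gdegA g) *g Gen (gdegA g) (gelA g) (gdegK g + 1) (dK (gelK g)) >>.

Definition tdiff (s : FT A K) : FT A K :=
  \sum_(g <- dom s) coeff g s *: gen_diff g.

Definition alpha_gen (g : gen A K) : A := gelA g * phi (gelK g).

Definition alpha (s : FT A K) : A :=
  \sum_(g <- dom s) alpha_gen g *~ coeff g s.

Definition alpha_dga_iso : Prop :=
  [/\ (* alpha is well defined on the quotient and injective *)
      (forall s t, wf_FT s -> wf_FT t -> (alpha s = alpha t <-> tensor_rel (s - t))),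
      (forall a : A, exists2 s, wf_FT s & alpha s = a),
      (forall g, wf_gen g -> HA (gdegA g + gdegK g) (alpha (fgen g))),
      alpha tone = 1 /\
      (forall s t, wf_FT s -> wf_FT t -> alpha (tmul s t) = alpha s * alpha t)
    &
      (forall s, wf_FT s -> alpha (tdiff s) = dA (alpha s))].

End Tensor.

(* Main.v *)
Require Import Defs.
From HB Require Import structures.
From mathcomp Require Import all_boot all_order all_algebra.
From mathcomp Require Import freeg.
Set Implicit Arguments.
Unset Strict Implicit.
Unset Printing Implicit Defensive.
Import Order.TTheory GRing.Theory Num.Theory.
Local Open Scope ring_scope.

Section Lin.
Variables (A K : pzRingType) (M : zmodType) (F : gen A K -> M).

Definition lin (s : FT A K) : M := \sum_(g <- dom s) F g *~ coeff g s.

Lemma lin_sub s (l : seq (gen A K)) : uniq l -> {subset dom s <= l} ->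
  lin s = \sum_(g <- l) F g *~ coeff g s.
Proof.
move=> ul sub; rewrite (bigID (mem (dom s))) /=.
rewrite [X in _ = _ + X]big1 ?addr0; last first.
  by move=> g /negP gn; rewrite coeff_outdom ?mulr0z //; apply/negP.
rewrite -big_filter /lin; apply: perm_big; apply: uniq_perm.
- exact: uniq_dom.
- exact: filter_uniq.
by move=> g; rewrite mem_filter; case H: (g \in dom s) => //=; rewrite (sub _ H).
Qed.

Lemma lin_is_additive : additive lin.
Proof.
move=> s t; set l := undup (dom s ++ dom t).
have ul : uniq l by apply: undup_uniq.
have ss : {subset dom s <= l} by move=> g gs; rewrite mem_undup mem_cat gs.
have st : {subset dom t <= l} by move=> g gs; rewrite mem_undup mem_cat gs orbT.
have sst : {subset dom (s - t) <= l}.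
  by move=> g /domB; rewrite mem_undup.
rewrite (lin_sub ul ss) (lin_sub ul st) (lin_sub ul sst) -sumrB.
by apply: eq_bigr => g _; rewrite coeffB mulrzBr.
Qed.

HB.instance Definition _ := GRing.isAdditive.Build (FT A K) M lin lin_is_additive.

Lemma linU k g : lin << k *g g >> = F g *~ k.
Proof.
have [->|k0] := eqVneq k 0; first by rewrite freegU0 raddf0 mulr0z.
by rewrite /lin domU // big_seq1 coeffU eqxx mulr1.
Qed.

Lemma linD s t : lin (s + t) = lin s + lin t. Proof. exact: raddfD. Qed.
Lemma linB s t : lin (s - t) = lin s - lin t. Proof. exact: raddfB. Qed.
Lemma lin0 : lin 0 = 0. Proof. exact: raddf0. Qed.
Lemma lin_sum (I : Type) (r : seq I) (P : pred I) (G : I -> FT A K) :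
  lin (\sum_(i <- r | P i) G i) = \sum_(i <- r | P i) lin (G i).
Proof. exact: raddf_sum. Qed.

Lemma linZ k s : lin (k *: s) = lin s *~ k.
Proof. by rewrite -[k in LHS]intz scaler_int raddfMz. Qed.

End Lin.
Lemma sum_pred1g (M : nmodType) (T : eqType) (D : seq T) x (c : M) : uniq D -> x \in D ->
  \sum_(n <- D | x == n) c = c.
Proof.
move=> uD xD; rewrite (eq_bigl (pred1 x)) => [|n]; last by rewrite /= eq_sym.
by rewrite -big_filter filter_pred1_uniq // big_seq1.
Qed.

Section Graded.
Variables (A : pzRingType) (H : int -> A -> Prop).
Hypothesis HG : is_graded H.

Lemma H0 n : H n 0. Proof. by case: HG => h _ _ _ _; apply: h. Qed.
Lemma HB n a b : H n a -> H n b -> H n (a - b). Proof. by case: HG => _ h _ _ _; apply: h. Qed.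
Lemma HN n a : H n a -> H n (- a).
Proof. by move=> h; rewrite -sub0r; apply: HB => //; apply: H0. Qed.
Lemma HD n a b : H n a -> H n b -> H n (a + b).
Proof. by move=> ha hb; rewrite -[b]opprK; apply: HB => //; apply: HN. Qed.
Lemma HM m n a b : H m a -> H n b -> H (m + n) (a * b).
Proof. by case: HG => _ _ [h _] _ _; apply: h. Qed.
Lemma H1 : H 0 1. Proof. by case: HG => _ _ [_ h] _ _. Qed.
Lemma Heq m n a : m = n -> H m a -> H n a. Proof. by move=> ->. Qed.
Lemma Hsum n (I : Type) (r : seq I) (P : pred I) (F : I -> A) :
  (forall i, P i -> H n (F i)) -> H n (\sum_(i <- r | P i) F i).
Proof.
move=> h; elim/big_rec: _ => [|i x Pi hx]; first exact: H0.
by apply: HD => //; apply: h.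
Qed.
Lemma HMz n a k : H n a -> H n (a *~ k).
Proof.
move=> h; have hn : forall j : nat, H n (a *+ j).
  by elim=> [|j IH]; [rewrite mulr0n; apply: H0 | rewrite mulrS; apply: HD].
case: k => k; first by rewrite -pmulrn; apply: hn.
by rewrite NegzE mulrNz -pmulrn; apply: HN; apply: hn.
Qed.

Definition homog (s : seq (int * A)) := {in s, forall p, H p.1 p.2}.

Definition proj n (s : seq (int * A)) := \sum_(p <- s | p.1 == n) p.2.

Lemma proj_hom n s : homog s -> H n (proj n s).
Proof.
move=> hs; rewrite /proj big_seq_cond; apply: Hsum => p /andP [ps /eqP <-].
exact: hs.
Qed.

Lemma sum_pred1 (T : eqType) (D : seq T) x (c : A) : uniq D -> x \in D ->
  \sum_(n <- D | x == n) c = c.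
Proof.
move=> uD xD; rewrite (eq_bigl (pred1 x)) => [|n]; last by rewrite /= eq_sym.
by rewrite -big_filter filter_pred1_uniq // big_seq1.
Qed.

Lemma proj0 s : homog s -> \sum_(p <- s) p.2 = 0 -> forall n, proj n s = 0.
Proof.
move=> hs s0 n.
set D := undup (map fst s).
have uD : uniq D by apply: undup_uniq.
set v := map (fun m => (m, proj m s)) D.
have mv : map fst v = D by rewrite /v -map_comp map_id.
have hv : homog v.
  by move=> p /mapP [m _ ->]; apply: proj_hom.
have sv : \sum_(p <- v) p.2 = 0.
  rewrite /v big_map /proj.
  rewrite (exchange_big_dep predT) //=.
  rewrite -[RHS]s0; apply: eq_big_seq => p ps.
  by apply: sum_pred1 => //; rewrite mem_undup; apply: map_f.
have := HG; case=> _ _ _ _ /(_ v); rewrite mv => /(_ uD hv sv) hz.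
case nD : (n \in D).
  by have := hz (n, proj n s) (map_f _ nD).
rewrite /proj big1_seq // => p /andP [/eqP pn ps].
by move: nD; rewrite mem_undup -pn (map_f fst ps).
Qed.

Lemma proj_eq s t : homog s -> homog t ->
  \sum_(p <- s) p.2 = \sum_(p <- t) p.2 -> forall n, proj n s = proj n t.
Proof.
move=> hs ht e n.
set u := s ++ map (fun p => (p.1, - p.2)) t.
have hu : homog u.
  move=> p; rewrite mem_cat => /orP [/hs //|/mapP [q qt ->]] /=.
  by apply: HN; apply: ht.
have su : \sum_(p <- u) p.2 = 0.
  by rewrite big_cat big_map /= sumrN e subrr.
have := proj0 hu su n; rewrite /proj big_cat big_map /= sumrN.
by move/eqP; rewrite subr_eq0 => /eqP.
Qed.

Lemma proj_single n a s : H n a -> homog s -> a = \sum_(p <- s) p.2 ->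
  proj n s = a.
Proof.
move=> ha hs e.
have h1 : homog [:: (n, a)] by move=> p; rewrite inE => /eqP ->.
have e' : \sum_(p <- s) p.2 = \sum_(p <- [:: (n, a)]) p.2 by rewrite big_seq1.
rewrite (proj_eq hs h1 e').
by rewrite /proj big_cons big_nil /= eqxx addr0.
Qed.

Lemma proj_other n m a s : H n a -> homog s -> a = \sum_(p <- s) p.2 ->
  m != n -> proj m s = 0.
Proof.
move=> ha hs e mn.
have h1 : homog [:: (n, a)] by move=> p; rewrite inE => /eqP ->.
have e' : \sum_(p <- s) p.2 = \sum_(p <- [:: (n, a)]) p.2 by rewrite big_seq1.
rewrite (proj_eq hs h1 e').
by rewrite /proj big_cons big_nil /= eq_sym (negPf mn).
Qed.

End Graded.
Section Sign.
Variable R : pzRingType.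

Lemma sgnN n : sgn R (- n) = sgn R n.
Proof. by rewrite /sgn abszN. Qed.

Lemma sgn0 : sgn R 0 = 1. Proof. by []. Qed.

Lemma sgnS_nat (k : nat) : sgn R (k%:Z + 1) = - sgn R k.
Proof. by rewrite /sgn -PoszD addn1 /= exprS mulN1r. Qed.

Lemma sgnS n : sgn R (n + 1) = - sgn R n.
Proof.
case: n => k; first exact: sgnS_nat.
rewrite NegzE -addn1 PoszD opprD -addrA addNr addr0 !sgnN.
by rewrite -opprD sgnN sgnS_nat opprK.
Qed.

Lemma sgnP n : sgn R (n - 1) = - sgn R n.
Proof. by rewrite -[in RHS](subrK 1 n) sgnS opprK. Qed.

Lemma sgnD m n : sgn R (m + n) = sgn R m * sgn R n.
Proof.
elim/int_rec: n => [|k IH|k IH]; first by rewrite addr0 sgn0 mulr1.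
  by rewrite -addn1 PoszD addrA !sgnS IH mulrN.
rewrite -addn1 PoszD opprD addrA !sgnP IH mulrN //.
Qed.

Lemma sgnK n : sgn R n * sgn R n = 1.
Proof. by rewrite /sgn -expr2 sqrr_sign. Qed.

Lemma sgn_comm n (x : R) : sgn R n * x = x * sgn R n.
Proof. by rewrite /sgn (commr_sign x). Qed.

Lemma sgn_int n : (sgn int n)%:~R = sgn R n.
Proof. by rewrite /sgn rmorph_sign. Qed.

Lemma mulrz_sgn (x : R) n : x *~ sgn int n = sgn R n * x.
Proof. by rewrite -mulrzl sgn_int. Qed.

End Sign.



Section DGA.
Variables (A : pzRingType) (H : int -> A -> Prop) (d : A -> A).
Hypothesis Hd : is_dga H d.

Lemma dga_graded : is_graded H. Proof. by case: Hd. Qed.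
Lemma dD a b : d (a + b) = d a + d b. Proof. by case: Hd => _ h _ _ _; apply: h. Qed.
Lemma d0 : d 0 = 0.
Proof. by have := dD 0 0; rewrite addr0 => h; apply: (addrI (d 0)); rewrite addr0 -h. Qed.
Lemma dN a : d (- a) = - d a.
Proof. by apply/eqP; rewrite -(addr_eq0) -dD addNr d0. Qed.
Lemma dB a b : d (a - b) = d a - d b. Proof. by rewrite dD dN. Qed.
Lemma dH n a : H n a -> H (n + 1) (d a). Proof. by case: Hd => _ _ h _ _; apply: h. Qed.
Lemma dd a : d (d a) = 0. Proof. by case: Hd => _ _ _ h _; apply: h. Qed.
Lemma dM n a b : H n a -> d (a * b) = d a * b + sgn A n * a * d b.
Proof. by case: Hd => _ _ _ _ h; apply: h. Qed.
Lemma d1 : d 1 = 0.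
Proof.
have := @dM 0%R 1 1 (H1 dga_graded); rewrite ?sgn0 !mulr1 !mul1r => h.
by apply: (addrI (d 1)); rewrite addr0 -h.
Qed.
Lemma dsum (I : Type) (r : seq I) (P : pred I) (F : I -> A) :
  d (\sum_(i <- r | P i) F i) = \sum_(i <- r | P i) d (F i).
Proof. exact: (big_morph d dD d0). Qed.
Lemma dMz a k : d (a *~ k) = d a *~ k.
Proof.
have hn : forall j : nat, d (a *+ j) = d a *+ j.
  by elim=> [|j IH]; rewrite ?mulr0n ?d0 // !mulrS dD IH.
by case: k => k; rewrite ?NegzE ?mulrNz -!pmulrn ?dN hn.
Qed.
End DGA.

Section Main.
Variables (K A : pzRingType) (HK : int -> K -> Prop) (dK : K -> K)
    (HA : int -> A -> Prop) (dA : A -> A) (phi : K -> A).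
Hypotheses (HKd : is_dga HK dK) (Hgc : graded_commutative HK) (Hac : acyclic dK)
  (HAd : is_dga HA dA) (Hov : dga_over HK dK HA dA phi).

Let GK := dga_graded HKd.
Let GA := dga_graded HAd.

Lemma phiD x y : phi (x + y) = phi x + phi y. Proof. by case: Hov. Qed.
Lemma phiM x y : phi (x * y) = phi x * phi y. Proof. by case: Hov. Qed.
Lemma phi1 : phi 1 = 1. Proof. by case: Hov. Qed.
Lemma phiH n x : HK n x -> HA n (phi x). Proof. by case: Hov => _ _ _ [h _] _; apply: h. Qed.
Lemma phid x : dA (phi x) = phi (dK x). Proof. by case: Hov. Qed.
Lemma phi0 : phi 0 = 0.
Proof. by have := phiD 0 0; rewrite addr0 => h; apply: (addrI (phi 0)); rewrite addr0 -h. Qed.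
Lemma phiN x : phi (- x) = - phi x.
Proof. by apply/eqP; rewrite -(addr_eq0) -phiD addNr phi0. Qed.
Lemma phiB x y : phi (x - y) = phi x - phi y. Proof. by rewrite phiD phiN. Qed.

Lemma phi_comm q x p b : HK q x -> HA p b -> phi x * b = sgn A (q * p) * (b * phi x).
Proof.
move=> hx hb; case: Hov => _ _ _ [_ /(_ x) [s [hs e]]] _.
have hs' : homog HA s by move=> z /hs [].
have ep := proj_single GA (phiH hx) hs' e.
rewrite -ep /proj big_distrl big_distrr /= big_distrr /=.
rewrite [LHS]big_seq_cond [RHS]big_seq_cond; apply: eq_bigr => z /andP [zs /eqP zq].
have [_ hz] := hs z zs; rewrite (hz p b hb) zq.
by [].
Qed.

Lemma exists_e : exists e, HK (-1) e /\ dK e = 1.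
Proof.
have [y hy] := Hac (d1 HKd).
have [_ _ _ /(_ y) [s [hs ey]] _] := GK.
set t := map (fun p => (p.1 + 1, dK p.2)) s.
have ht : homog HK t by move=> z /mapP [p ps ->] /=; apply: (dH HKd (hs p ps)).
have et : 1 = \sum_(p <- t) p.2 by rewrite hy ey (dsum HKd) big_map.
have := proj_single GK (H1 GK) ht et.
rewrite /proj big_map /= => h.
exists (proj (-1) s); split; first by apply: proj_hom.
rewrite /proj (dsum HKd) -h; apply: eq_bigl => p /=.
by rewrite addr_eq0.
Qed.


Let RT := tensor_rel HK dK HA dA phi.
Definition eqv (s t : FT A K) := RT (s - t).
Definition gg p (a : A) q (x : K) : FT A K := fgen (Gen p a q x).

Lemma RT0 : RT 0. Proof. exact: trel_zero. Qed.
Lemma RTB s t : RT s -> RT t -> RT (s - t). Proof. exact: trel_sub. Qed.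
Lemma RTN s : RT s -> RT (- s).
Proof. by move=> h; rewrite -sub0r; apply: RTB => //; apply: RT0. Qed.
Lemma RTD s t : RT s -> RT t -> RT (s + t).
Proof. by move=> hs ht; rewrite -[t]opprK; apply: RTB => //; apply: RTN. Qed.
Lemma RTMz s k : RT s -> RT (s *~ k).
Proof.
move=> h; have hn : forall j : nat, RT (s *+ j).
  by elim=> [|j IH]; [rewrite mulr0n; apply: RT0 | rewrite mulrS; apply: RTD].
case: k => k; first by rewrite -pmulrn; apply: hn.
by rewrite NegzE mulrNz -pmulrn; apply: RTN; apply: hn.
Qed.

Lemma eqv_refl s : eqv s s. Proof. by rewrite /eqv subrr; apply: RT0. Qed.
Lemma eqv_eq s t : s = t -> eqv s t. Proof. by move=> ->; apply: eqv_refl. Qed.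
Lemma eqv_sym s t : eqv s t -> eqv t s.
Proof. by rewrite /eqv => h; rewrite -opprB; apply: RTN. Qed.
Lemma eqv_trans s t u : eqv s t -> eqv t u -> eqv s u.
Proof.
rewrite /eqv => h1 h2; have -> : s - u = (s - t) + (t - u) by rewrite addrA subrK.
exact: RTD.
Qed.
Lemma eqv_D s s' t t' : eqv s s' -> eqv t t' -> eqv (s + t) (s' + t').
Proof.
rewrite /eqv => h1 h2; have -> : s + t - (s' + t') = (s - s') + (t - t').
  by rewrite opprD addrACA.
exact: RTD.
Qed.
Lemma eqv_N s t : eqv s t -> eqv (- s) (- t).
Proof. by rewrite /eqv -opprD => h; apply: RTN. Qed.
Lemma eqv_Mz s t k : eqv s t -> eqv (s *~ k) (t *~ k).
Proof. by rewrite /eqv -mulrzBl => h; apply: RTMz. Qed.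
Lemma eqv_0 s : RT s -> eqv s 0. Proof. by rewrite /eqv subr0. Qed.

Lemma gl_add p a b q x : HA p a -> dA a = 0 -> HA p b -> dA b = 0 -> HK q x ->
  eqv (gg p (a + b) q x) (gg p a q x + gg p b q x).
Proof.
move=> ha da hb db hx; rewrite /eqv opprD addrA.
by apply: trel_gen; apply: rel_addl.
Qed.

Lemma gr_add p a q x y : HA p a -> dA a = 0 -> HK q x -> HK q y ->
  eqv (gg p a q (x + y)) (gg p a q x + gg p a q y).
Proof.
move=> ha da hx hy; rewrite /eqv opprD addrA.
by apply: trel_gen; apply: rel_addr.
Qed.

Lemma gl_0 p q x : HK q x -> RT (gg p 0 q x).
Proof.
move=> hx; have := gl_add (H0 GA p) (d0 HAd) (H0 GA p) (d0 HAd) hx.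
by rewrite /eqv addr0 opprD addrA subrr sub0r => /RTN; rewrite opprK.
Qed.

Lemma gr_0 p a q : HA p a -> dA a = 0 -> RT (gg p a q 0).
Proof.
move=> ha da; have := gr_add ha da (H0 GK q) (H0 GK q).
by rewrite /eqv addr0 opprD addrA subrr sub0r => /RTN; rewrite opprK.
Qed.

Lemma gl_N p a q x : HA p a -> dA a = 0 -> HK q x ->
  eqv (gg p (- a) q x) (- gg p a q x).
Proof.
move=> ha da hx.
have hna : HA p (- a) by exact: (HN GA ha).
have dna : dA (- a) = 0 by rewrite (dN HAd) da oppr0.
have := gl_add ha da hna dna hx; rewrite subrr => h.
have h0 := eqv_0 (gl_0 p hx).
have := eqv_trans (eqv_sym h) h0.
rewrite /eqv subr0 => h2.
by rewrite /eqv opprK addrC.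
Qed.

Lemma gr_N p a q x : HA p a -> dA a = 0 -> HK q x ->
  eqv (gg p a q (- x)) (- gg p a q x).
Proof.
move=> ha da hx.
have hnx : HK q (- x) by exact: (HN GK hx).
have := gr_add ha da hx hnx; rewrite subrr => h.
have h0 := eqv_0 (gr_0 q ha da).
have := eqv_trans (eqv_sym h) h0.
rewrite /eqv subr0 => h2.
by rewrite /eqv opprK addrC.
Qed.

Lemma gl_Mz p a q x k : HA p a -> dA a = 0 -> HK q x ->
  eqv (gg p (a *~ k) q x) (gg p a q x *~ k).
Proof.
move=> ha da hx.
have hn : forall j : nat, eqv (gg p (a *+ j) q x) (gg p a q x *+ j).
  elim=> [|j IH]; first by rewrite !mulr0n; apply: eqv_0; apply: gl_0.
  rewrite !mulrS; apply: eqv_trans (eqv_D (eqv_refl _) IH).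
  apply: gl_add => //; first by rewrite pmulrn; exact: (HMz GA _ ha).
  by rewrite pmulrn (dMz HAd) da mul0rz.
case: k => k; first by rewrite -!pmulrn; apply: hn.
rewrite NegzE !mulrNz -!pmulrn.
apply: eqv_trans (eqv_N (hn k.+1)).
apply: gl_N => //; first by rewrite pmulrn; exact: (HMz GA _ ha).
by rewrite pmulrn (dMz HAd) da mul0rz.
Qed.

Lemma gr_Mz p a q x k : HA p a -> dA a = 0 -> HK q x ->
  eqv (gg p a q (x *~ k)) (gg p a q x *~ k).
Proof.
move=> ha da hx.
have hn : forall j : nat, eqv (gg p a q (x *+ j)) (gg p a q x *+ j).
  elim=> [|j IH]; first by rewrite !mulr0n; apply: eqv_0; apply: gr_0.
  rewrite !mulrS; apply: eqv_trans (eqv_D (eqv_refl _) IH).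
  apply: gr_add => //; by rewrite pmulrn; exact: (HMz GK _ hx).
case: k => k; first by rewrite -!pmulrn; apply: hn.
rewrite NegzE !mulrNz -!pmulrn.
apply: eqv_trans (eqv_N (hn k.+1)).
apply: gr_N => //; by rewrite pmulrn; exact: (HMz GK _ hx).
Qed.

Lemma gl_sgn p a q x n : HA p a -> dA a = 0 -> HK q x ->
  eqv (gg p (sgn A n * a) q x) (sgn int n *: gg p a q x).
Proof. by move=> *; rewrite -mulrz_sgn -[X in X *: _]intz scaler_int; apply: gl_Mz. Qed.

Lemma gr_sgn p a q x n : HA p a -> dA a = 0 -> HK q x ->
  eqv (gg p a q (sgn K n * x)) (sgn int n *: gg p a q x).
Proof. by move=> *; rewrite -mulrz_sgn -[X in X *: _]intz scaler_int; apply: gr_Mz. Qed.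

Lemma eqv_Z s t k : eqv s t -> eqv (k *: s) (k *: t).
Proof. by rewrite -[k]intz !scaler_int; apply: eqv_Mz. Qed.

Lemma gbal p a r z q x : HA p a -> dA a = 0 -> HK r z -> dK z = 0 -> HK q x ->
  eqv (gg (p + r) (a * phi z) q x) (gg p a (r + q) (z * x)).
Proof. by move=> *; apply: trel_gen; apply: rel_bal. Qed.

Lemma alphaE s : alpha phi s = lin (alpha_gen phi) s. Proof. by []. Qed.

Lemma alpha_gg p a q x : alpha phi (gg p a q x) = a * phi x.
Proof. by rewrite alphaE /gg /fgen linU mulr1z. Qed.

Lemma wf_U g : wf_gen HK HA dA g -> wf_FT HK HA dA << g >>.
Proof. by move=> h z; rewrite domU1 inE => /eqP ->. Qed.
Lemma wf_D s t : wf_FT HK HA dA s -> wf_FT HK HA dA t -> wf_FT HK HA dA (s + t).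
Proof. by move=> hs ht z /domD_subset; rewrite mem_cat => /orP [/hs|/ht]. Qed.
Lemma wf_Z s k : wf_FT HK HA dA s -> wf_FT HK HA dA (k *: s).
Proof. by move=> hs z /domZ_subset /hs. Qed.
Lemma wf_N s : wf_FT HK HA dA s -> wf_FT HK HA dA (- s).
Proof. by move=> hs z; rewrite domN; apply: hs. Qed.
Lemma wf_B s t : wf_FT HK HA dA s -> wf_FT HK HA dA t -> wf_FT HK HA dA (s - t).
Proof. by move=> hs ht; apply: wf_D => //; apply: wf_N. Qed.
Lemma wf_0 : wf_FT HK HA dA 0.
Proof. by move=> z; rewrite dom0. Qed.
Lemma wf_sum (I : Type) (r : seq I) (P : pred I) (F : I -> FT A K) :
  (forall i, P i -> wf_FT HK HA dA (F i)) -> wf_FT HK HA dA (\sum_(i <- r | P i) F i).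
Proof.
move=> h; elim/big_rec: _ => [|i x Pi hx]; first exact: wf_0.
by apply: wf_D => //; apply: h.
Qed.

Lemma sgnm1 : sgn A (-1) = -1. Proof. by rewrite sgnN /sgn /= expr1. Qed.

Section WithE.
Variable e : K.
Hypotheses (he : HK (-1) e) (de : dK e = 1).

Let E := phi e.
Lemma hE : HA (-1) E. Proof. exact: phiH. Qed.
Lemma dE : dA E = 1. Proof. by rewrite /E phid de phi1. Qed.
Lemma E_comm p b : HA p b -> E * b = sgn A p * (b * E).
Proof. by move=> hb; rewrite (phi_comm he hb) mulN1r sgnN. Qed.

Lemma E_split c : c = dA (E * c) + E * dA c.
Proof. by rewrite (dM HAd _ hE) dE mul1r sgnm1 mulN1r mulNr subrK. Qed.

Definition beta n c : FT A K :=
  gg n (dA (E * c)) 0 1 + sgn int (n + 1) *: gg (n + 1) (dA c) (-1) e.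

Lemma alpha_beta n c : HA n c -> alpha phi (beta n c) = c.
Proof.
move=> hc; rewrite /beta alphaE linD linZ -!alphaE !alpha_gg phi1 mulr1.
rewrite mulrz_sgn -(E_comm (dH HAd hc)).
by rewrite -E_split.
Qed.

Lemma wf_beta n c : HA n c -> wf_FT HK HA dA (beta n c).
Proof.
move=> hc; apply: wf_D; last apply: wf_Z; apply: wf_U.
  split; rewrite /gdegA /gelA /gdegK /gelK /=.
  - apply: Heq (dH HAd (HM GA hE hc)); by rewrite addrC addrA addrN add0r.
  - exact: (dd HAd).
  - exact: (H1 GK).
split; rewrite /gdegA /gelA /gdegK /gelK /=.
- exact: (dH HAd hc).
- exact: (dd HAd).
- exact: he.
Qed.


Lemma sgnm1K : sgn K (-1) = -1. Proof. by rewrite sgnN /sgn /= expr1. Qed.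

Lemma gen_beta p a q x : HA p a -> dA a = 0 -> HK q x ->
  eqv (gg p a q x) (beta (p + q) (a * phi x)).
Proof.
move=> ha da hx.
have hdx : HK (q + 1) (dK x) := dH HKd hx.
have hex : HK (-1 + q) (e * x) := HM GK he hx.
have hz1 : HK q (dK (e * x)).
  by apply: Heq (dH HKd hex); rewrite addrC addrA addrN add0r.
have hdx_e : HK q (dK x * e).
  by apply: Heq (HM GK hdx he); rewrite addrK.
have hz2 : HK q (e * dK x).
  by apply: Heq (HM GK he hdx); rewrite addrCA addNr addr0.
have dex : dK (e * x) = x - e * dK x.
  by rewrite (dM HKd _ he) de mul1r sgnm1K mulN1r mulNr.
have spl : x = dK (e * x) + e * dK x by rewrite dex subrK.
have S1 : eqv (gg p a q x) (gg p a q (dK (e * x)) + gg p a q (e * dK x)).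
  by rewrite {1}spl; apply: gr_add.
have S2 : eqv (gg p a q (dK (e * x))) (gg (p + q) (a * phi (dK (e * x))) 0 1).
  have := gbal ha da hz1 (dd HKd _) (H1 GK).
  by rewrite addr0 mulr1 => h; apply: eqv_sym.
have S3 : eqv (gg p a q (e * dK x)) (sgn int (q + 1) *: gg p a q (dK x * e)).
  by rewrite (Hgc he hdx) mulN1r sgnN; apply: gr_sgn.
have S4 : eqv (gg p a q (dK x * e)) (gg (p + q + 1) (a * phi (dK x)) (-1) e).
  have := gbal ha da hdx (dd HKd _) he.
  by rewrite addrK addrA => h; apply: eqv_sym.
have L : eqv (gg p a q x) (gg (p + q) (a * phi (dK (e * x))) 0 1 +
     sgn int (q + 1) *: gg (p + q + 1) (a * phi (dK x)) (-1) e).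
  apply: eqv_trans S1 _; apply: eqv_D => //.
  apply: eqv_trans S3 _; exact: eqv_Z.
apply: eqv_trans L _; rewrite /beta.
have hEa : E * (sgn A p * a) = a * E.
  by rewrite mulrA -sgn_comm -mulrA (E_comm ha) mulrA sgnK mul1r.
have T1 : dA (E * (a * phi x)) = a * phi (dK (e * x)).
  rewrite (dM HAd _ hE) dE mul1r sgnm1 mulN1r (dM HAd _ ha) da mul0r add0r phid.
  rewrite mulNr (mulrA E) hEa dex phiB phiM mulrBr mulrA //.
have T2 : dA (a * phi x) = sgn A p * (a * phi (dK x)).
  by rewrite (dM HAd _ ha) da mul0r add0r phid mulrA.
have hb : HA (p + q + 1) (a * phi (dK x)).
  by apply: Heq (HM GA ha (phiH hdx)); rewrite addrA.
have db : dA (a * phi (dK x)) = 0.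
  by rewrite (dM HAd _ ha) da mul0r add0r phid (dd HKd) phi0 mulr0.
rewrite T1; apply: eqv_D; first exact: eqv_refl.
rewrite T2; apply: eqv_sym.
apply: eqv_trans (eqv_Z _ (gl_sgn _ hb db he)) _.
rewrite scalerA; apply: eqv_eq; congr (_ *: _).
by rewrite -addrA (sgnD int p (q + 1)) mulrAC sgnK mul1r.
Qed.


Lemma eqv_sum (I : Type) (r : seq I) (P : pred I) (F G : I -> FT A K) :
  (forall i, P i -> eqv (F i) (G i)) ->
  eqv (\sum_(i <- r | P i) F i) (\sum_(i <- r | P i) G i).
Proof.
move=> h; elim/big_rec2: _ => [|i x y Pi hxy]; first exact: eqv_refl.
by apply: eqv_D => //; apply: h.
Qed.

Lemma hEc n c : HA n c -> HA n (dA (E * c)).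
Proof. by move=> hc; apply: Heq (dH HAd (HM GA hE hc)); rewrite addrC addrA addrN add0r. Qed.

Lemma beta_add n c1 c2 : HA n c1 -> HA n c2 ->
  eqv (beta n (c1 + c2)) (beta n c1 + beta n c2).
Proof.
move=> h1 h2; rewrite /beta addrACA; apply: eqv_D.
  rewrite mulrDr (dD HAd); apply: gl_add; rewrite ?(dd HAd) //; try exact: hEc.
  exact: (H1 GK).
rewrite -scalerDr; apply: eqv_Z; rewrite (dD HAd); apply: gl_add; rewrite ?(dd HAd) //;
  exact: (dH HAd).
Qed.

Lemma beta0 n : eqv (beta n 0) 0.
Proof.
rewrite /beta mulr0 (d0 HAd) -[0 in X in eqv _ X](addr0 0).
apply: eqv_D; first by apply: eqv_0; apply: gl_0; apply: (H1 GK).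
rewrite -(scaler0 _ (sgn int (n + 1))); apply: eqv_Z; apply: eqv_0; exact: gl_0.
Qed.

Lemma beta_sum n (I : Type) (r : seq I) (P : pred I) (c : I -> A) :
  (forall i, P i -> HA n (c i)) ->
  eqv (\sum_(i <- r | P i) beta n (c i)) (beta n (\sum_(i <- r | P i) c i)).
Proof.
move=> h.
suff : eqv (\sum_(i <- r | P i) beta n (c i)) (beta n (\sum_(i <- r | P i) c i))
  /\ HA n (\sum_(i <- r | P i) c i) by case.
elim/big_rec2: _ => [|i x y Pi [hxy hy]]; first by split; [apply: eqv_sym; apply: beta0 | apply: (H0 GA n)].
split; last by apply: (HD GA (h i Pi) hy).
apply: eqv_trans (eqv_D (eqv_refl _) hxy) _.
by apply: eqv_sym; apply: beta_add => //; apply: h.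
Qed.

Definition td (g : gen A K) := gdegA g + gdegK g.

Lemma gen_beta_k g k : wf_gen HK HA dA g ->
  eqv << k *g g >> (beta (td g) (alpha_gen phi g *~ k)).
Proof.
case: g => [[[p a] q] x]; rewrite /wf_gen /td /gdegA /gelA /gdegK /gelK /alpha_gen /=.
case=> ha da hx.
rewrite -[k in << k *g _ >>]intz -freegU_mulz.
have hak : HA p (a *~ k) by exact: (HMz GA k ha).
have dak : dA (a *~ k) = 0 by rewrite (dMz HAd) da mul0rz.
apply: eqv_trans (eqv_sym (gl_Mz k ha da hx)) _.
rewrite -mulrzAl; exact: gen_beta.
Qed.

Lemma inj_main u : wf_FT HK HA dA u -> alpha phi u = 0 -> RT u.
Proof.
move=> wu au.
set D := undup (map td (dom u)).
have uD : uniq D by apply: undup_uniq.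
pose un n := \sum_(g <- dom u | td g == n) << coeff g u *g g >>.
have eu : u = \sum_(n <- D) un n.
  rewrite -{1}(freeg_sumE u) /un (exchange_big_dep predT) //=.
  apply: eq_big_seq => g gu; symmetry; apply: sum_pred1g => //.
  by rewrite mem_undup; apply: map_f.
pose cn n := \sum_(g <- dom u | td g == n) alpha_gen phi g *~ coeff g u.
have acn n : alpha phi (un n) = cn n.
  by rewrite alphaE lin_sum; apply: eq_bigr => g _; rewrite linU.
have hcn n : HA n (cn n).
  rewrite /cn big_seq_cond; apply: (Hsum GA) => g /andP [gu /eqP <-].
  apply: (HMz GA); have [ha _ hx] := wu g gu.
  exact: (HM GA ha (phiH hx)).
set v := map (fun n => (n, cn n)) D.
have mv : map fst v = D by rewrite /v -map_comp map_id.
have hv : homog HA v by move=> p /mapP [m _ ->]; apply: hcn.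
have sv : \sum_(p <- v) p.2 = 0.
  rewrite /v big_map /=; transitivity (alpha phi u); last exact: au.
  by rewrite [in RHS]eu alphaE lin_sum; apply: eq_bigr => n _; rewrite -alphaE acn.
have := GA; case=> _ _ _ _ /(_ v); rewrite mv => /(_ uD hv sv) hz.
have cn0 n : n \in D -> cn n = 0 by move=> nD; have := hz (n, cn n) (map_f _ nD).
suff : eqv u 0 by rewrite /eqv subr0.
have z : \sum_(n <- D) (0 : FT A K) = 0 by rewrite big1.
rewrite eu; apply: (eqv_trans _ (eqv_eq z)).
rewrite [X in eqv _ X]big_seq_cond [X in eqv X _]big_seq_cond.
apply: eqv_sum => n /andP [nD _].
have e1 : eqv (un n) (\sum_(g <- dom u | td g == n) beta n (alpha_gen phi g *~ coeff g u)).
  rewrite /un [X in eqv X _]big_seq_cond [X in eqv _ X]big_seq_cond.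
  apply: eqv_sum => g /andP [gu /eqP <-]; apply: gen_beta_k; exact: wu.
apply: eqv_trans e1 _.
rewrite big_seq_cond.
apply: (eqv_trans (@beta_sum n _ _ _ (fun g => alpha_gen phi g *~ coeff g u) _)).
  move=> g /andP [gu /eqP <-]; have [ha _ hx] := wu g gu.
  apply: (HMz GA); exact: (HM GA ha (phiH hx)).
rewrite -big_seq_cond -/(cn n) cn0 //; exact: beta0.
Qed.

Lemma surj a : exists2 s, wf_FT HK HA dA s & alpha phi s = a.
Proof.
have [_ _ _ /(_ a) [s [hs ea]] _] := GA.
exists (\sum_(p <- s) beta p.1 p.2).
  rewrite big_seq; apply: wf_sum => p ps; exact: wf_beta (hs p ps).
rewrite alphaE lin_sum ea [LHS]big_seq [RHS]big_seq; apply: eq_bigr => p ps.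
by rewrite -alphaE alpha_beta //; exact: hs.
Qed.

End WithE.

Lemma alpha_rel s : RT s -> alpha phi s = 0.
Proof.
elim=> {s} [s hs| |s t _ hs _ ht]; last by rewrite alphaE linB -!alphaE hs ht subrr.
  case: hs => {s} *; rewrite alphaE !linB -!alphaE.
  - by rewrite !alpha_gg mulrDl addrAC addrK subrr.
  - by rewrite !alpha_gg phiD mulrDr addrAC addrK subrr.
  - by rewrite !alpha_gg phiM mulrA subrr.
by rewrite alphaE lin0.
Qed.

Lemma alpha_deg g : wf_gen HK HA dA g -> HA (gdegA g + gdegK g) (alpha phi (fgen g)).
Proof.
case=> ha _ hx; rewrite /fgen alphaE linU mulr1z /alpha_gen.
exact: (HM GA ha (phiH hx)).
Qed.

Lemma alpha_tone : alpha phi (tone K A) = 1.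
Proof. by rewrite /tone alpha_gg phi1 mulr1. Qed.

Lemma alpha_tdiff s : wf_FT HK HA dA s -> alpha phi (tdiff dK s) = dA (alpha phi s).
Proof.
move=> ws; have -> : alpha phi s = \sum_(g <- dom s) alpha_gen phi g *~ coeff g s by [].
rewrite /tdiff alphaE lin_sum (dsum HAd).
rewrite [LHS]big_seq [RHS]big_seq; apply: eq_bigr => g gs.
have [ha da hx] := ws g gs.
rewrite linZ /gen_diff linU (dMz HAd) /alpha_gen /=.
rewrite (dM HAd _ ha) da mul0r add0r phid mulrz_sgn mulrA //.
Qed.

Lemma alpha_tmul s t : wf_FT HK HA dA s -> wf_FT HK HA dA t ->
  alpha phi (tmul s t) = alpha phi s * alpha phi t.
Proof.
move=> ws wt.
have -> : alpha phi s = \sum_(g <- dom s) alpha_gen phi g *~ coeff g s by [].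
have -> : alpha phi t = \sum_(g <- dom t) alpha_gen phi g *~ coeff g t by [].
rewrite /tmul alphaE lin_sum big_distrl /=.
rewrite [LHS]big_seq [RHS]big_seq; apply: eq_bigr => g gs.
rewrite lin_sum big_distrr /= [LHS]big_seq [RHS]big_seq; apply: eq_bigr => h ht.
have [hag _ hxg] := ws g gs; have [hah _ hxh] := wt h ht.
move: hag hxg hah hxh; case: g {gs} => [[[pg ag] qg] xg]; case: h {ht} => [[[ph ah] qh] xh].
rewrite /gdegA /gelA /gdegK /gelK /= => hag hxg hah hxh.
rewrite linZ /gen_mul linU /alpha_gen /gdegA /gelA /gdegK /gelK /=.
set cg := coeff _ s; set ch := coeff _ t.
have -> : (ag * phi xg *~ cg) * (ah * phi xh *~ ch) =
    (ag * phi xg * (ah * phi xh)) *~ (cg * ch).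
  by rewrite mulrzAl mulrzAr (mulrC cg) mulrzA.
congr (_ *~ _); rewrite mulrz_sgn phiM.
have -> : ag * phi xg * (ah * phi xh) = ag * (phi xg * ah) * phi xh by rewrite !mulrA.
by rewrite (phi_comm hxg hah) !mulrA -(sgn_comm (qg * ph) ag).
Qed.

End Main.

Theorem lemma4p5 (K A : pzRingType) (HK : int -> K -> Prop) (dK : K -> K)
    (HA : int -> A -> Prop) (dA : A -> A) (phi : K -> A) :
  is_dga HK dK -> graded_commutative HK -> acyclic dK ->
  is_dga HA dA -> dga_over HK dK HA dA phi ->
  alpha_dga_iso HK dK HA dA phi.
Proof.
move=> HKd Hgc Hac HAd Hov.
have [e [he de]] := exists_e HKd Hac.
split.
- move=> s t ws wt; split.
    move=> est; apply: (inj_main HKd Hgc HAd Hov he de).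
      exact: wf_B.
    by rewrite alphaE linB -!alphaE est subrr.
  move=> r; apply/eqP; rewrite -subr_eq0; apply/eqP.
  by rewrite -[_ - _]/(lin (alpha_gen phi) s - lin (alpha_gen phi) t) -linB; apply: (alpha_rel Hov r).
- by move=> a; apply: (surj HKd HAd Hov he de).
- by move=> g wg; apply: (alpha_deg HAd Hov).
- split; first exact: (alpha_tone Hov).
  by move=> s t ws wt; apply: (alpha_tmul HAd Hov).
- by move=> s ws; apply: (alpha_tdiff HAd Hov).
Qed.
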